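(* Let $\mathbf{A}\in\mathbb{R}^{n\times n}$ and $\mathbf{C}_i\in\mathbb{R}^{r_i\times n}$ for $i=1,\dots,N$, and suppose the pair $(\mathbf{A},\mathbf{C})$ is observable, where $\mathbf{C}=[\mathbf{C}_1^T\ \cdots\ \mathbf{C}_N^T]^T$. Let the sequence of directed graphs $\{\mathcal{G}[k]\}_{k\ge 0}$ satisfy the joint strong-connectivity assumption with parameter $T$. Then for every $\rho\in(0,1)$ there exist observer gains $\mathbf{L}_1,\dots,\mathbf{L}_N$ (with $\mathbf{L}_j$ of compatible size) such that, when every node runs the freshness-index algorithm described in the context, for all initial states $\mathbf{z}[0]$ and all initial estimates $\hat{\mathbf{z}}_i[0]$ there is a constant $c\ge 0$ with $$\|\hat{\mathbf{z}}_i[k]-\mathbf{z}[k]\|\le c\,\rho^k\quad\text{for all } k\ge (2N-1)(N-1)T \text{ and all } i\in\mathcal{V}.$$ Consequently the state estimates $\hat{\mathbf{x}}_i[k]:=\mathbf{T}\hat{\mathbf{z}}_i[k]$ satisfy $\|\hat{\mathbf{x}}_i[k]-\mathbf{x}[k]\|\le \|\mathbf{T}\|\,c\,\rho^k$ for the same range of $k$, i.e. every node's estimation error converges to zero exponentially fast at rate $\rho$.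
   Context: Graphs. Nodes $\mathcal{V}=\{1,\dots,N\}$. At each time $k\in\mathbb{N}=\{0,1,2,\dots\}$ there is a directed graph $\mathcal{G}[k]=(\mathcal{V},\mathcal{E}[k])$; $(i,j)\in\mathcal{E}[k]$ means node $i$ can send information to node $j$ at time $k$. $\mathcal{N}_i[k]=\{l\neq i:(l,i)\in\mathcal{E}[k]\}$ is the set of neighbors of $i$ at time $k$. The union graph over an interval of times has vertex set $\mathcal{V}$ and edge set the union of the edge sets over that interval. Joint strong-connectivity assumption: there is $T\in\mathbb{N}_+=\{1,2,\dots\}$ such that for every $k\in\mathbb{N}$ the union graph over $[kT,(k+1)T)$ is strongly connected. System. $\mathbf{x}[k+1]=\mathbf{A}\mathbf{x}[k]$, $\mathbf{y}_i[k]=\mathbf{C}_i\mathbf{x}[k]$. Since $(\mathbf{A},\mathbf{C})$ is observable, there is an invertible $\mathbf{T}$ (fixed throughout) such that with $\mathbf{x}[k]=\mathbf{T}\mathbf{z}[k]$ one has $\mathbf{z}[k+1]=\bar{\mathbf{A}}\mathbf{z}[k]$, $\mathbf{y}_i[k]=\mathbf{C}_i\mathbf{T}\mathbf{z}[k]$, where $\mathbf{z}=[\mathbf{z}^{(1)T}\cdots\mathbf{z}^{(N)T}]^T$ with $\mathbf{z}^{(j)}\in\mathbb{R}^{n_j}$ (''substate $j$''), $\sum_j n_j=n$, $\bar{\mathbf{A}}=\mathbf{T}^{-1}\mathbf{A}\mathbf{T}$ is block lower triangular with blocks $\mathbf{A}_{jq}$ ($\mathbf{A}_{jq}=0$ for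 $q>j$), so $\mathbf{z}^{(j)}[k+1]=\mathbf{A}_{jj}\mathbf{z}^{(j)}[k]+\sum_{q=1}^{j-1}\mathbf{A}_{jq}\mathbf{z}^{(q)}[k]$; and $\mathbf{C}_i\mathbf{T}=[\mathbf{C}_{i1}\ \cdots\ \mathbf{C}_{ii}\ 0\ \cdots\ 0]$, so $\mathbf{y}_i[k]=\sum_{q=1}^{i}\mathbf{C}_{iq}\mathbf{z}^{(q)}[k]$; moreover each pair $(\mathbf{A}_{jj},\mathbf{C}_{jj})$ is observable. Node $j$ is called the source node of substate $j$. Freshness indices. For each substate $j$ and node $i$, node $i$ keeps $\tau^{(j)}_i[k]\in\{\omega\}\cup\mathbb{N}$, where $\omega$ is a special symbol. Initialization: $\tau^{(j)}_j[0]=0$, $\tau^{(j)}_i[0]=\omega$ for $i\neq j$. The source keeps $\tau^{(j)}_j[k]=0$ for all $k$. For $i\neq j$, let $\mathcal{M}^{(j)}_i[k]=\{l\in\mathcal{N}_i[k]:\tau^{(j)}_l[k]\neq\omega\}$. Case 1, $\tau^{(j)}_i[k]=\omega$: if $\mathcal{M}^{(j)}_i[k]\neq\emptyset$, let $u$ be any minimizer of $\tau^{(j)}_l[k]$ over $l\in\mathcal{M}^{(j)}_i[k]$, set $\tau^{(j)}_i[k+1]=\tau^{(j)}_u[k]+1$ and perform an ''adopt-$u$'' estimate update; otherwise set $\tau^{(j)}_i[k+1]=\omega$ and perform an ''open-loop'' estimate update. Case 2, $\tau^{(j)}_i[k]\neq\omega$: let $\mathcal{F}^{(j)}_i[k]=\{l\in\mathcal{M}^{(j)}_i[k]:\tau^{(j)}_l[k]<\tau^{(j)}_i[k]\}$;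 if nonempty, let $u$ be any minimizer of $\tau^{(j)}_l[k]$ over $\mathcal{F}^{(j)}_i[k]$, set $\tau^{(j)}_i[k+1]=\tau^{(j)}_u[k]+1$ and perform an adopt-$u$ update; otherwise set $\tau^{(j)}_i[k+1]=\tau^{(j)}_i[k]+1$ and perform an open-loop update. Estimates. Each node $i$ keeps $\hat{\mathbf{z}}_i[k]=[\hat{\mathbf{z}}^{(1)T}_i[k]\cdots\hat{\mathbf{z}}^{(N)T}_i[k]]^T$, with arbitrary initial value. Source update for substate $j$: $\hat{\mathbf{z}}^{(j)}_j[k+1]=(\mathbf{A}_{jj}-\mathbf{L}_j\mathbf{C}_{jj})\hat{\mathbf{z}}^{(j)}_j[k]+\sum_{q=1}^{j-1}(\mathbf{A}_{jq}-\mathbf{L}_j\mathbf{C}_{jq})\hat{\mathbf{z}}^{(q)}_j[k]+\mathbf{L}_j\mathbf{y}_j[k]$. Adopt-$u$ update at node $i\ne j$: $\hat{\mathbf{z}}^{(j)}_i[k+1]=\mathbf{A}_{jj}\hat{\mathbf{z}}^{(j)}_u[k]+\sum_{q=1}^{j-1}\mathbf{A}_{jq}\hat{\mathbf{z}}^{(q)}_i[k]$. Open-loop update at node $i\neq j$: $\hat{\mathbf{z}}^{(j)}_i[k+1]=\mathbf{A}_{jj}\hat{\mathbf{z}}^{(j)}_i[k]+\sum_{q=1}^{j-1}\mathbf{A}_{jq}\hat{\mathbf{z}}^{(q)}_i[k]$. These updates are carried out for every substate $j$ at every time $k$. *)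

(* Defs.v *)
From HB Require Import structures.
From mathcomp Require Import all_boot all_order all_algebra.
Set Implicit Arguments. Unset Strict Implicit. Unset Printing Implicit Defensive.
Import Order.TTheory GRing.Theory Num.Theory.
Local Open Scope ring_scope.

Definition obsmx (R : pzRingType) (m p : nat) (A : 'M[R]_m) (C : 'M[R]_(p, m))
  : 'M[R]_(\sum_(k < m) p, m) := \mxcol_(k < m) (C *m A ^+ k).

Definition observable (R : fieldType) (m p : nat) (A : 'M[R]_m) (C : 'M[R]_(p, m)) :=
  \rank (obsmx A C) = m.

Definition vnorm (R : realDomainType) (m : nat) (v : 'cV[R]_m) : R :=
  \big[Num.max/0]_(i < m) `|v i 0|.
Definition mnorm (R : realDomainType) (m : nat) (M : 'M[R]_m) : R :=
  \big[Num.max/0]_(i < m) \sum_(j < m) `|M i j|.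

(* E k : rel 'I_N ; E k a b means a can send information to b at time k *)
Definition union_graph (N : nat) (E : nat -> rel 'I_N) (s len : nat) : rel 'I_N :=
  fun a b => [exists t : 'I_len, E (s + t)%N a b].

Definition strongly_connected (N : nat) (e : rel 'I_N) : Prop :=
  forall a b : 'I_N, connect e a b.

Definition joint_strong_connectivity (N : nat) (E : nat -> rel 'I_N) (Tp : nat) : Prop :=
  (0 < Tp)%N /\
  forall k : nat, strongly_connected (union_graph E (k * Tp) Tp).

Definition neighbor (N : nat) (E : nat -> rel 'I_N) (k : nat) (i l : 'I_N) : bool :=
  (l != i) && E k l i.

(* tau k i j : freshness index of node i for substate j at time k; None = omega *)
(* zh k i : estimate of node i at time k (full transformed state, blocks nj) *)
Section Algo.
Variables (R : realFieldType) (N : nat) (nj : 'I_N -> nat) (r : 'I_N -> nat).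
Local Notation n := (\sum_(j < N) nj j)%N.
Variables (Abar : 'M[R]_n) (C : forall i : 'I_N, 'M[R]_(r i, n)) (T : 'M[R]_n).
Variables (L : forall j : 'I_N, 'M[R]_(nj j, r j)).
Variables (E : nat -> rel 'I_N) (y : forall i : 'I_N, nat -> 'cV[R]_(r i)).

Definition Ablk (j q : 'I_N) : 'M[R]_(nj j, nj q) := @submxblock R N N nj nj Abar j q.
Definition Cblk (i q : 'I_N) : 'M[R]_(r i, nj q) := @submxrow R N nj (r i) (C i *m T) q.
Definition sub (v : 'cV[R]_n) (j : 'I_N) : 'cV[R]_(nj j) := @submxcol R N nj 1%N v j.

Variables (tau : nat -> 'I_N -> 'I_N -> option nat) (zh : nat -> 'I_N -> 'cV[R]_n).

Definition coupling (k : nat) (i j : 'I_N) : 'cV[R]_(nj j) :=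
  \sum_(q < N | (q < j)%N) Ablk j q *m sub (zh k i) q.

Definition adopt_update (k : nat) (i j u : 'I_N) : Prop :=
  sub (zh k.+1 i) j = Ablk j j *m sub (zh k u) j + coupling k i j.

Definition openloop_update (k : nat) (i j : 'I_N) : Prop :=
  sub (zh k.+1 i) j = Ablk j j *m sub (zh k i) j + coupling k i j.

Definition source_update (k : nat) (j : 'I_N) : Prop :=
  sub (zh k.+1 j) j =
    (Ablk j j - L j *m Cblk j j) *m sub (zh k j) j
    + \sum_(q < N | (q < j)%N) (Ablk j q - L j *m Cblk j q) *m sub (zh k j) q
    + L j *m y j k.

Definition hasidx (k : nat) (l j : 'I_N) (t : nat) : Prop := tau k l j = Some t.

Definition nonsource_step (k : nat) (i j : 'I_N) : Prop :=
  match tau k i j with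
  | None =>
      (exists l tl, neighbor E k i l /\ hasidx k l j tl) /\
        (exists u tu, neighbor E k i u /\ hasidx k u j tu /\
           (forall l tl, neighbor E k i l -> hasidx k l j tl -> (tu <= tl)%N) /\
           tau k.+1 i j = Some tu.+1 /\ adopt_update k i j u)
      \/
      (~ (exists l tl, neighbor E k i l /\ hasidx k l j tl)) /\
        tau k.+1 i j = None /\ openloop_update k i j
  | Some ti =>
      (exists u tu, neighbor E k i u /\ hasidx k u j tu /\ (tu < ti)%N /\
           (forall l tl, neighbor E k i l -> hasidx k l j tl -> (tl < ti)%N ->
              (tu <= tl)%N) /\
           tau k.+1 i j = Some tu.+1 /\ adopt_update k i j u)
      \/
      (~ (exists l tl, neighbor E k i l /\ hasidx k l j tl /\ (tl < ti)%N)) /\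
        tau k.+1 i j = Some ti.+1 /\ openloop_update k i j
  end.

Definition runs_algorithm : Prop :=
  (forall i j : 'I_N, i != j -> tau 0 i j = None) /\
  (forall (k : nat) (j : 'I_N), tau k j j = Some 0%N) /\
  (forall (k : nat) (j : 'I_N), source_update k j) /\
  (forall (k : nat) (i j : 'I_N), i != j -> nonsource_step k i j).

End Algo.

(* Main.v *)
Require Import Defs.
From HB Require Import structures.
From mathcomp Require Import all_boot all_order all_algebra.
From mathcomp Require Import zify.
From Stdlib Require Import ClassicalEpsilon.
Set Implicit Arguments. Unset Strict Implicit. Unset Printing Implicit Defensive.
Import Order.TTheory GRing.Theory Num.Theory.
Local Open Scope ring_scope.


Definition obs' (R : fieldType) m p (A : 'M[R]_m) (C : 'M[R]_(p,m)) :=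
  forall x : 'cV[R]_m, (forall t, C *m A ^+ t *m x = 0) -> x = 0.

Lemma exprSmx (R : pzRingType) n (M : 'M[R]_n) k : M ^+ k.+1 = M *m M ^+ k.
Proof. by rewrite exprS mulmxE. Qed.
Lemma exprSrmx (R : pzRingType) n (M : 'M[R]_n) k : M ^+ k.+1 = M ^+ k *m M.
Proof. by rewrite exprSr mulmxE. Qed.
Lemma expr0mx (R : pzRingType) n (M : 'M[R]_n) : M ^+ 0 = 1%:M.
Proof. by rewrite expr0 idmxE. Qed.

Lemma powUV (R : fieldType) m n (U : 'M[R]_(m,n)) (V : 'M[R]_(n,m)) k :
  (U *m V) ^+ k.+1 = U *m (V *m U) ^+ k *m V.
Proof.
elim: k => [|k IH]; first by rewrite expr1 expr0mx mulmx1.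
by rewrite exprSrmx IH !mulmxA -[in RHS]mulmxA exprSrmx !mulmxA.
Qed.

Lemma core (R : fieldType) rho p' b (A : 'M[R]_(rho + b)) :
  (forall p (C' : 'M[R]_(p, b)) (A' : 'M[R]_b), obs' A' C' -> exists (L : 'M[R]_(b, p)) (k : nat), (A' - L *m C')^+k = 0) ->
  obs' A (block_mx 1%:M 0 0 0 : 'M[R]_(rho + p', rho + b)) ->
  exists (L : 'M[R]_(rho + b, rho + p')) (k : nat), (A - L *m (block_mx 1%:M 0 0 0 : 'M[R]_(rho + p', rho + b)))^+k = 0.
Proof.
move=> IH Hobs.
rewrite -[A]submxK in Hobs *.
set A11 := ulsubmx A; set A12 := ursubmx A; set A21 := dlsubmx A; set A22 := drsubmx A.
have Hobs2 : obs' A22 A12.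
  move=> x2 Hx2.
  have Hp : forall t, (block_mx A11 A12 A21 A22) ^+ t *m col_mx 0 x2 = col_mx 0 (A22 ^+ t *m x2).
    elim=> [|t IHt].
    by rewrite !expr0mx !mul1mx.
    rewrite exprSmx -mulmxA IHt mul_block_col !mulmx0 !add0r.
    by rewrite exprSmx mulmxA Hx2 mulmxA.
  have := Hobs (col_mx 0 x2) => H.
  suff : col_mx 0 x2 = 0 :> 'cV[R]_(rho + b).
    by rewrite -col_mx0 => /eq_col_mx [].
  apply: H => t; rewrite -mulmxA Hp mul_block_col !mul0mx !mulmx0 !addr0.
  by rewrite col_mx0.
have [L' [k HL]] := IH _ _ _ Hobs2.
exists (block_mx A11 A12 A21 A22 *m block_mx 1%:M (0 : 'M[R]_(rho, p')) L' 0), k.+1.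
set AA := block_mx A11 A12 A21 A22.
have HP : (1%:M : 'M[R]_(rho + b)) - block_mx 1%:M (0 : 'M[R]_(rho, p')) L' 0 *m block_mx 1%:M 0 0 0
   = col_mx 0 1%:M *m row_mx (- L') 1%:M.
  rewrite mulmx_block mul_col_row !mulmx1 !mulmx0 !mul0mx !addr0 mul1mx.
  rewrite (scalar_mx_block rho b) opp_block_mx add_block_mx.
  by rewrite !subrr !subr0 sub0r.
have -> : AA - AA *m block_mx 1%:M (0 : 'M[R]_(rho, p')) L' 0 *m block_mx 1%:M 0 0 0
   = (AA *m col_mx 0 1%:M) *m row_mx (- L') 1%:M.
  by rewrite -!mulmxA -HP mulmxBr mulmx1.
rewrite powUV -mulmxA mul_block_col !mulmx0 !add0r !mulmx1 mul_row_col mulNmx mul1mx.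
by rewrite addrC HL mul0mx mulmx0.
Qed.

Definition Pdb (R : fieldType) m p (A : 'M[R]_m) (C : 'M[R]_(p,m)) :=
  obs' A C -> exists (L : 'M[R]_(m, p)) (k : nat), (A - L *m C) ^+ k = 0.

Lemma cast_trans (R : fieldType) p p1 n n1 (ep : p = p1) (en : n = n1) (A : 'M[R]_n) (C : 'M[R]_(p,n)) :
  Pdb (castmx (en, en) A) (castmx (ep, en) C) -> Pdb A C.
Proof. by case: p1 / ep; case: n1 / en; rewrite !castmx_id. Qed.

Lemma conj_pow (R : fieldType) n (Q M : 'M[R]_n) k : Q \in unitmx ->
  (invmx Q *m M *m Q) ^+ k = invmx Q *m M ^+ k *m Q.
Proof.
move=> HQ; elim: k => [|k IH]; first by rewrite !expr0mx mulmx1 mulVmx.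
by rewrite exprSmx IH !mulmxA mulmxK // exprSmx !mulmxA.
Qed.

Lemma deadbeat (R : fieldType) m p (C : 'M[R]_(p,m)) (A : 'M[R]_m) : Pdb A C.
Proof.
have [M] := ubnP m; elim: M m p C A => // M IHM [|n] p C A ltmM Hobs.
  by exists 0, 1%N; apply/matrixP => [[]].
set rho := \rank C.
have rho_gt0 : (0 < rho)%N.
  rewrite lt0n mxrank_eq0; apply/negP => /eqP C0.
  have : const_mx (1 : R) = 0 :> 'cV[R]_n.+1.
    by apply: Hobs => t; rewrite C0 !mul0mx.
  by move/matrixP => /(_ ord0 ord0); rewrite !mxE => /eqP; rewrite oner_eq0.
set P1 := col_ebase C; set Q := row_ebase C.
have HP1 : P1 \in unitmx := col_ebase_unit C.
have HQ : Q \in unitmx := row_ebase_unit C.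
have HC : C = P1 *m pid_mx rho *m Q by rewrite mulmx_ebase.
set A' := Q *m A *m invmx Q.
have Hobs' : obs' A' (pid_mx rho : 'M[R]_(p, n.+1)).
  move=> x Hx.
  have : invmx Q *m x = 0.
    apply: Hobs => t.
    have -> : A = invmx Q *m A' *m Q by rewrite /A' !mulmxA mulVmx // mul1mx mulmxKV.
    rewrite conj_pow // HC.
    have -> : P1 *m pid_mx rho *m Q *m (invmx Q *m A' ^+ t *m Q) *m (invmx Q *m x)
       = P1 *m (pid_mx rho *m A' ^+ t *m x).
      by rewrite !mulmxA !mulmxK.
    by rewrite Hx mulmx0.
  by move/(congr1 (mulmx Q)); rewrite mulKVmx // mulmx0.
have [L' [k HL']] : exists (L' : 'M[R]_(n.+1, p)) (k : nat), (A' - L' *m pid_mx rho) ^+ k = 0.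
  have en : n.+1 = (rho + (n.+1 - rho))%N by rewrite subnKC // rank_leq_col.
  have ep : p = (rho + (p - rho))%N by rewrite subnKC // rank_leq_row.
  suff H : Pdb A' (pid_mx rho : 'M[R]_(p, n.+1)) by exact: H Hobs'.
  apply: (@cast_trans R p _ n.+1 _ ep en A' (pid_mx rho)).
  have -> : castmx (ep, en) (pid_mx rho : 'M[R]_(p, n.+1)) = block_mx 1%:M 0 0 0.
    rewrite -pid_mx_block; apply/matrixP => i j; rewrite castmxE !mxE /=.
    done.
  apply: core => p2 C2 A2.
  apply: IHM.
  by rewrite -ltnS (leq_trans _ ltmM) // ltnS ltn_subrL rho_gt0.
exists (invmx Q *m L' *m invmx P1), k.
have -> : A - invmx Q *m L' *m invmx P1 *m C = invmx Q *m (A' - L' *m pid_mx rho) *m Q.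
  rewrite mulmxBr mulmxBl; congr (_ - _).
    by rewrite /A' !mulmxA mulVmx // mul1mx mulmxKV.
  by rewrite HC !mulmxA mulmxKV.
by rewrite conj_pow // HL' mulmx0 mul0mx.
Qed.


Lemma fullrank_inj (R : fieldType) q m (M : 'M[R]_(q, m)) (x : 'cV[R]_m) :
  \rank M = m -> M *m x = 0 -> x = 0.
Proof.
move=> Hr Hx.
have H1 : (x^T <= kermx M^T)%MS by apply/sub_kermxP; rewrite -trmx_mul Hx trmx0.
have : kermx M^T = 0 by apply/eqP; rewrite -mxrank_eq0 mxrank_ker mxrank_tr Hr subnn.
move=> Hk; move: H1; rewrite Hk submx0 => /eqP Ht.
by rewrite -[x]trmxK Ht trmx0.
Qed.

Lemma obs_obs' (R : fieldType) m p (A : 'M[R]_m) (C : 'M[R]_(p, m)) :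
  observable A C -> obs' A C.
Proof.
move=> Ho x Hx; apply: (fullrank_inj Ho).
by rewrite /obsmx mxcol_mul; under eq_mxcol do rewrite Hx; rewrite mxcol0.
Qed.


Lemma bigmax_ge0 (R : realDomainType) m (F : 'I_m -> R) :
  (forall i, 0 <= F i) -> 0 <= \big[Num.max/0]_(i < m) F i.
Proof. by move=> H; apply: (big_ind (fun x => 0 <= x)) => // a b Ha Hb; rewrite le_max Ha. Qed.

Lemma bigmax_le (R : realDomainType) m (F : 'I_m -> R) b :
  0 <= b -> (forall i, F i <= b) -> \big[Num.max/0]_(i < m) F i <= b.
Proof. by move=> H0 H; apply: (big_ind (fun x => x <= b)) => // a c Ha Hc; rewrite ge_max Ha. Qed.

Lemma le_bigmax (R : realDomainType) m (F : 'I_m -> R) i :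
  F i <= \big[Num.max/0]_(i < m) F i.
Proof. by rewrite (bigD1 i) //= le_max lexx. Qed.

Lemma vnorm_ge0 (R : realDomainType) m (v : 'cV[R]_m) : 0 <= vnorm v.
Proof. by apply: bigmax_ge0. Qed.

Lemma mnorm_ge0 (R : realDomainType) m (M : 'M[R]_m) : 0 <= mnorm M.
Proof. by apply: bigmax_ge0 => i; apply: sumr_ge0. Qed.

Lemma vnorm0 (R : realDomainType) m : vnorm (0 : 'cV[R]_m) = 0.
Proof. by apply/eqP; rewrite eq_le vnorm_ge0 andbT; apply: bigmax_le => // i; rewrite mxE normr0. Qed.

Lemma vnorm_mul (R : realDomainType) m (M : 'M[R]_m) (v : 'cV[R]_m) :
  vnorm (M *m v) <= mnorm M * vnorm v.
Proof.
apply: bigmax_le; first by rewrite mulr_ge0 ?mnorm_ge0 ?vnorm_ge0.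
move=> i; rewrite mxE.
apply: (le_trans (ler_norm_sum _ _ _)).
apply: (@le_trans _ _ (\sum_(j < m) `|M i j| * vnorm v)).
  apply: ler_sum => j _; rewrite normrM ler_wpM2l //.
  exact: (le_bigmax (fun j => `|v j 0|)).
rewrite -mulr_suml ler_wpM2r ?vnorm_ge0 //.
exact: (le_bigmax (fun i => \sum_(j < m) `|M i j|)).
Qed.


Lemma sub_mul (R : realFieldType) (N : nat) (nj : 'I_N -> nat)
  (M : 'M[R]_(\sum_(j < N) nj j)) (v : 'cV[R]_(\sum_(j < N) nj j)) j :
  @sub R N nj (M *m v) j = \sum_q @Ablk R N nj M j q *m @sub R N nj v q.
Proof.
by rewrite /sub /Ablk -{1}(submxblockK M) -{1}(submxcolK v) mul_mxblock_mxrow mxcolK.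
Qed.

Lemma sub_rowmul (R : realFieldType) (N : nat) (nj : 'I_N -> nat) p
  (M : 'M[R]_(p, \sum_(j < N) nj j)) (v : 'cV[R]_(\sum_(j < N) nj j)) :
  M *m v = \sum_q submxrow M q *m @sub R N nj v q.
Proof.
by rewrite /sub -{1}(submxrowK M) -{1}(submxcolK v) mul_mxrow_mxcol.
Qed.

Lemma tri_sum (V : nmodType) N (f : 'I_N -> V) (j : 'I_N) :
  (forall q : 'I_N, (j < q)%N -> f q = 0) ->
  \sum_q f q = f j + \sum_(q < N | (q < j)%N) f q.
Proof.
move=> H; rewrite (bigD1 j) //=; congr (_ + _).
rewrite (bigID (fun q : 'I_N => (q < j)%N)) /= [X in _ + X]big1 ?addr0.
  by apply: eq_bigl => q; case: eqVneq => // ->; rewrite ltnn.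
move=> q /andP [Hq]; rewrite -leqNgt leq_eqVlt => /orP [/eqP Hqj|]; last exact: H.
by case/eqP: Hq; apply: val_inj.
Qed.



Lemma crossing N (e : rel 'I_N) (S : {set 'I_N}) a b :
  a \in S -> b \notin S -> connect e a b ->
  exists x y, [/\ x \in S, y \notin S & e x y].
Proof.
move=> Ha Hb /connectP [p Hp Hl]; elim: p a Ha Hp Hl => [|c p IH] a Ha /=.
  by move=> _ Hab; rewrite Hab Ha in Hb.
case/andP => Hac Hp Hl.
case: (boolP (c \in S)) => Hc.
  exact: IH Hc Hp Hl.
by exists a, c.
Qed.

Section Fresh.
Variables (R : realFieldType) (N : nat) (nj r : 'I_N -> nat).
Variables (Abar : 'M[R]_(\sum_(j<N) nj j)) (C : forall i : 'I_N, 'M[R]_(r i, \sum_(j<N) nj j))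
  (T : 'M[R]_(\sum_(j<N) nj j)) (L : forall j : 'I_N, 'M[R]_(nj j, r j)) (E : nat -> rel 'I_N)
  (y : forall i : 'I_N, nat -> 'cV[R]_(r i)) (tau : nat -> 'I_N -> 'I_N -> option nat)
  (zh : nat -> 'I_N -> 'cV[R]_(\sum_(j<N) nj j)).
Hypothesis Hrun : runs_algorithm Abar C T L E y tau zh.
Variables (j : 'I_N) (w : nat).

Definition good k i := if tau k i j is Some t then (w + t <= k)%N else false.

Lemma good_mono k i : good k i -> good k.+1 i.
Proof.
case: Hrun => _ [Hsrc [_ Hstep]].
case: (eqVneq i j) => [->|Hij]; first by rewrite /good !Hsrc; lia.
move: (Hstep k i j Hij); rewrite /nonsource_step /good.
case: (tau k i j) => [ti|] //.
by case => [[u [tu [_ [_ [Hlt [_ [-> _]]]]]]] | [_ [-> _]]] H; lia.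
Qed.

Lemma good_monoD k i d : good k i -> good (k + d) i.
Proof. by move=> H; elim: d => [|d IH]; rewrite ?addn0 // addnS; apply: good_mono. Qed.

Lemma good_spread k i u : neighbor E k i u -> good k u -> good k.+1 i.
Proof.
case: Hrun => _ [Hsrc [_ Hstep]] Hn.
rewrite {1}/good; case Hu: (tau k u j) => [tu|] // Htu.
case: (eqVneq i j) => [->|Hij]; first by rewrite /good !Hsrc; lia.
move: (Hstep k i j Hij); rewrite /nonsource_step /good.
case: (tau k i j) => [ti|].
  case => [[u' [tu' [_ [_ [Hlt [Hmin [-> _]]]]]]] | [Hnex [-> _]]].
    case: (ltnP tu ti) => Hti.
      by have := Hmin u tu Hn Hu Hti; lia.
    lia.
  case: (ltnP tu ti) => Hti; last lia.
  by exfalso; apply: Hnex; exists u, tu.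
case => [[_ [u' [tu' [_ [_ [Hmin [-> _]]]]]]] | [Hnex _]].
  by have := Hmin u tu Hn Hu; lia.
by exfalso; apply: Hnex; exists u, tu.
Qed.

Lemma good_src k : (w <= k)%N -> good k j.
Proof. by case: Hrun => _ [Hsrc _]; rewrite /good Hsrc; lia. Qed.

Definition Sg k : {set 'I_N} := [set i | good k i].

Lemma window Tp m : joint_strong_connectivity E Tp -> (w <= m * Tp)%N ->
  Sg (m * Tp) \subset Sg (m.+1 * Tp) /\
  (Sg (m * Tp) != setT -> (#|Sg (m * Tp)| < #|Sg (m.+1 * Tp)|)%N).
Proof.
move=> [Tp_gt0 Hsc] Hw.
have Hsub : Sg (m * Tp) \subset Sg (m.+1 * Tp).
  apply/subsetP => i; rewrite !inE => Hi.
  by rewrite mulSn addnC; apply: good_monoD.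
split => // Hne; apply: proper_card; rewrite properE Hsub /=.
have [b Hb] : exists b, b \notin Sg (m * Tp).
  case: (pickP (fun b => b \notin Sg (m * Tp))) => [b Hb|H]; first by exists b.
  by case/negP: Hne; apply/eqP/setP => i; rewrite in_setT; apply/negPn/negP => Hn; move: (H i); rewrite /= Hn.
have Hj : j \in Sg (m * Tp) by rewrite inE; apply: good_src.
have [a [c [Ha Hc Hac]]] := crossing Hj Hb (Hsc m j b).
move: Hac; rewrite /union_graph => /existsP [t Ht].
apply/subsetPn; exists c; last by [].
rewrite inE.
have Hgt : good (m * Tp + t).+1 c.
  apply: (@good_spread _ _ a); first by rewrite /neighbor Ht andbT; apply: contraNneq Hc => <-.
  by apply: good_monoD; move: Ha; rewrite inE.
have -> : (m.+1 * Tp = (m * Tp + t).+1 + (Tp - t.+1))%N by rewrite mulSn; have := ltn_ord t; lia.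
exact: good_monoD.
Qed.

Lemma all_good Tp : joint_strong_connectivity E Tp ->
  exists K, forall k i, (K <= k)%N -> good k i.
Proof.
move=> HJ; have Tp_gt0 := HJ.1.
have Hw : forall s, (w <= (w + s) * Tp)%N by move=> s; nia.
have HN : (0 < N)%N by have := ltn_ord j; lia.
have Hcl : forall s, (minn s.+1 N <= #|Sg ((w + s) * Tp)|)%N.
  elim=> [|s IH].
    have : (0 < #|Sg ((w + 0) * Tp)|)%N.
      by apply/card_gt0P; exists j; rewrite inE; apply: good_src.
    lia.
  have [Hsub Hlt] := window HJ (Hw s).
  rewrite addnS.
  have Hle := subset_leq_card Hsub.
  case: (eqVneq (Sg ((w + s) * Tp)) setT) => [Heq|Hne].
    by move: Hle; rewrite Heq cardsT card_ord; lia.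
  by have := Hlt Hne; lia.
exists ((w + N.-1) * Tp)%N => k i Hk.
have HT : Sg ((w + N.-1) * Tp) = setT.
  apply/eqP; rewrite eqEcard subsetT cardsT card_ord.
  by have := Hcl N.-1; lia.
have : i \in Sg ((w + N.-1) * Tp) by rewrite HT inE.
rewrite inE => Hg; rewrite -(subnKC Hk); exact: good_monoD.
Qed.

End Fresh.
Lemma zid (V : zmodType) (X SA LSC LCz Az : V) :
  X + (SA - LSC) + (LCz + LSC) - (Az + SA) = X - (Az - LCz).
Proof. rewrite addrACA subrK (addrC Az SA) addrKA. by rewrite opprB addrA. Qed.

Section Err.
Variables (R : realFieldType) (N : nat) (nj r : 'I_N -> nat).
Local Notation n := (\sum_(j < N) nj j)%N.
Variables (A T : 'M[R]_n) (C : forall i : 'I_N, 'M[R]_(r i, n)) (E : nat -> rel 'I_N) (Tp : nat).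
Variables (L : forall j : 'I_N, 'M[R]_(nj j, r j)).
Variables (x : nat -> 'cV[R]_n) (tau : nat -> 'I_N -> 'I_N -> option nat) (zh : nat -> 'I_N -> 'cV[R]_n).
Local Notation Abar := (invmx T *m A *m T).
Hypothesis HT : T \in unitmx.
Hypothesis HA : forall j q : 'I_N, (j < q)%N -> @Ablk R N nj Abar j q = 0.
Hypothesis HCb : forall i q : 'I_N, (i < q)%N -> @Cblk R N nj r C T i q = 0.
Hypothesis HL : forall j : 'I_N, exists kf : nat,
  (@Ablk R N nj Abar j j - L j *m @Cblk R N nj r C T j j) ^+ kf = 0.
Hypothesis HJ : joint_strong_connectivity E Tp.
Hypothesis Hx : forall k, x k.+1 = A *m x k.
Hypothesis Hrun : @runs_algorithm R N nj r Abar C T L E (fun i k => C i *m x k) tau zh.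

Definition z k := invmx T *m x k.
Local Notation sb := (@sub R N nj).
Local Notation Ab := (@Ablk R N nj Abar).
Local Notation Cb := (@Cblk R N nj r C T).

Lemma zS k : z k.+1 = Abar *m z k.
Proof. by rewrite /z Hx !mulmxA mulmxK. Qed.

Lemma zblk k j : sb (z k.+1) j = Ab j j *m sb (z k) j + \sum_(q < N | (q < j)%N) Ab j q *m sb (z k) q.
Proof.
rewrite zS sub_mul; apply: tri_sum => q Hq.
by rewrite HA // mul0mx.
Qed.

Lemma yblk k j : C j *m x k = Cb j j *m sb (z k) j + \sum_(q < N | (q < j)%N) Cb j q *m sb (z k) q.
Proof.
have -> : x k = T *m z k by rewrite /z mulKVmx.
rewrite mulmxA sub_rowmul; apply: tri_sum => q Hq.
by move: (HCb Hq); rewrite /Cblk => ->; rewrite mul0mx.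
Qed.

Definition low k i (j : 'I_N) := forall q : 'I_N, (q < j)%N -> sb (zh k i) q = sb (z k) q.

Lemma coup k i j : low k i j -> coupling Abar zh k i j = \sum_(q < N | (q < j)%N) Ab j q *m sb (z k) q.
Proof. by move=> H; apply: eq_bigr => q Hq; rewrite H. Qed.

Definition ej (j : 'I_N) k i := sb (zh k i) j - sb (z k) j.

Lemma err_adopt k i j u : low k i j -> adopt_update Abar zh k i j u ->
  ej j k.+1 i = Ab j j *m ej j k u.
Proof.
move=> Hl Had; rewrite /ej Had coup // zblk.
by rewrite opprD addrACA subrr addr0 mulmxBr.
Qed.

Lemma err_src k j : low k j j ->
  ej j k.+1 j = (Ab j j - L j *m Cb j j) *m ej j k j.
Proof.
move=> Hl; case: Hrun => _ [_ [Hsrc _]].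
rewrite /ej (Hsrc k j) zblk yblk.
have -> : \sum_(q < N | (q < j)%N) (Ab j q - L j *m Cb j q) *m sb (zh k j) q
   = \sum_(q < N | (q < j)%N) Ab j q *m sb (z k) q - L j *m \sum_(q < N | (q < j)%N) Cb j q *m sb (z k) q.
  rewrite mulmx_sumr -sumrB; apply: eq_bigr => q Hq.
  by rewrite Hl // mulmxBl mulmxA.
rewrite mulmxDr !mulmxA zid mulmxBr; congr (_ - _).
by rewrite mulmxBl.
Qed.

Lemma main_j (j : 'I_N) : (exists K0, forall k i, (K0 <= k)%N -> low k i j) ->
  exists K, forall k i, (K <= k)%N -> ej j k i = 0.
Proof.
move=> [K0 HK0]; have [kf Hkf] := HL j.
set F := Ab j j - L j *m Cb j j in Hkf.
have Hs : forall d, ej j (K0 + d) j = F ^+ d *m ej j K0 j.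
  elim=> [|d IH]; first by rewrite addn0 expr0mx mul1mx.
  rewrite addnS err_src; last by apply: HK0; apply: leq_addr.
  by rewrite IH exprSmx mulmxA.
have Hsrc : forall k, (K0 + kf <= k)%N -> ej j k j = 0.
  move=> k Hk; rewrite -(subnKC (leq_trans (leq_addr kf K0) Hk)) Hs.
  have -> : (k - K0 = kf + (k - K0 - kf))%N by lia.
  by rewrite exprD Hkf mul0r mul0mx.
set Ks := (K0 + kf).+1.
case: Hrun => _ [Hsrc0 [_ Hstep]].
have Inv : forall k i t, tau k i j = Some t -> (Ks + t <= k)%N -> ej j k i = 0.
  elim=> [|k IH] i t Ht Hk; first by move: Hk; rewrite /Ks; lia.
  have HkK0 : (K0 <= k)%N by move: Hk; rewrite /Ks; lia.
  case: (eqVneq i j) => [->|Hij]; first by apply: Hsrc; move: Hk; rewrite /Ks; lia.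
  move: (Hstep k i j Hij); rewrite /nonsource_step.
  case Hti: (tau k i j) => [ti|].
    case => [[u [tu [_ [Hu [_ [_ [Hk1 Had]]]]]]] | [_ [Hk1 Hol]]].
      rewrite (err_adopt (HK0 k i HkK0) Had) (IH u tu Hu) ?mulmx0 //.
      by move: Hk1; rewrite Ht => -[Htu]; lia.
    rewrite (err_adopt (HK0 k i HkK0) Hol) (IH i ti Hti) ?mulmx0 //.
    by move: Hk1; rewrite Ht => -[Htu]; lia.
  case => [[_ [u [tu [_ [Hu [_ [Hk1 Had]]]]]]] | [_ [Hk1 _]]].
    rewrite (err_adopt (HK0 k i HkK0) Had) (IH u tu Hu) ?mulmx0 //.
    by move: Hk1; rewrite Ht => -[Htu]; lia.
  by rewrite Ht in Hk1.
have [K2 HK2] := all_good Hrun j Ks HJ.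
exists K2 => k i Hk; move: (HK2 k i Hk); rewrite /good.
case Ht: (tau k i j) => [t|] // Hle.
exact: Inv Ht Hle.
Qed.

Lemma eventually : exists K, forall k i, (K <= k)%N -> zh k i = z k.
Proof.
have H : forall j0 : nat, exists K, forall k i (q : 'I_N), (K <= k)%N -> (q < j0)%N -> sb (zh k i) q = sb (z k) q.
  elim=> [|j0 [K IH]]; first by exists 0%N.
  case: (ltnP j0 N) => Hj0.
    have [K' HK'] := @main_j (Ordinal Hj0) (ex_intro _ K (fun k i Hk q Hq => IH k i q Hk Hq)).
    exists (maxn K K') => k i q Hk Hq.
    have HkK : (K <= k)%N by move: Hk; rewrite geq_max => /andP [].
    have HkK' : (K' <= k)%N by move: Hk; rewrite geq_max => /andP [].
    move: Hq; rewrite ltnS leq_eqVlt => /orP [/eqP Hq|Hq]; last exact: IH.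
    have -> : q = Ordinal Hj0 by apply: val_inj.
    by apply/eqP; rewrite -subr_eq0; apply/eqP; apply: HK'.
  exists K => k i q Hk Hq; apply: IH => //.
  by apply: leq_trans (ltn_ord q) Hj0.
have [K HK] := H N.
exists K => k i Hk.
rewrite -(submxcolK (zh k i)) -(submxcolK (z k)); apply: eq_mxcol => q.
exact: HK Hk (ltn_ord q).
Qed.

End Err.

Lemma le_dsum (R : realDomainType) K N (F : 'I_K -> 'I_N -> R) a b :
  (forall a b, 0 <= F a b) -> F a b <= \sum_(a0 < K) \sum_(b0 < N) F a0 b0.
Proof.
move=> H0; rewrite (bigD1 a) //= (bigD1 b) //= -addrA ler_wpDr //.
apply: addr_ge0; first by apply: sumr_ge0.
by apply: sumr_ge0 => a0 _; apply: sumr_ge0.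
Qed.

Theorem theorem1 (R : realFieldType) (N : nat) (nj : 'I_N -> nat) (r : 'I_N -> nat)
  (A : 'M[R]_(\sum_(j < N) nj j)) (C : forall i : 'I_N, 'M[R]_(r i, \sum_(j < N) nj j))
  (T : 'M[R]_(\sum_(j < N) nj j)) (E : nat -> rel 'I_N) (Tp : nat) :
  (* (A, C) observable, C = [C_1; ...; C_N] *)
  observable A (\mxcol_(i < N) C i) ->
  (* the fixed transformation T and its structural properties *)
  T \in unitmx ->
  (forall j q : 'I_N, (j < q)%N -> @Ablk R N nj (invmx T *m A *m T) j q = 0) ->
  (forall i q : 'I_N, (i < q)%N -> @Cblk R N nj r C T i q = 0) ->
  (forall j : 'I_N, observable (@Ablk R N nj (invmx T *m A *m T) j j) (@Cblk R N nj r C T j j)) ->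
  (* joint strong connectivity *)
  joint_strong_connectivity E Tp ->
  forall rho : R, 0 < rho < 1 ->
  exists L : forall j : 'I_N, 'M[R]_(nj j, r j),
    forall (x : nat -> 'cV[R]_(\sum_(j < N) nj j))
           (tau : nat -> 'I_N -> 'I_N -> option nat)
           (zh : nat -> 'I_N -> 'cV[R]_(\sum_(j < N) nj j)),
      (forall k, x k.+1 = A *m x k) ->
      @runs_algorithm R N nj r (invmx T *m A *m T) C T L E (fun i k => C i *m x k) tau zh ->
      exists c : R, 0 <= c /\
        forall (k : nat) (i : 'I_N), ((2 * N - 1) * (N - 1) * Tp <= k)%N ->
          vnorm (zh k i - invmx T *m x k) <= c * rho ^+ k /\
          vnorm (T *m zh k i - x k) <= mnorm T * c * rho ^+ k.
Proof.
move=> _ HT HA HCb Hobsj HJ rho /andP [rho0 rho1].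
have Hex : forall j : 'I_N, exists Lj : 'M[R]_(nj j, r j), exists kf : nat,
    (@Ablk R N nj (invmx T *m A *m T) j j - Lj *m @Cblk R N nj r C T j j) ^+ kf = 0.
  by move=> j; apply: deadbeat; apply: obs_obs'; apply: Hobsj.
pose Lf := fun j => proj1_sig (constructive_indefinite_description _ (Hex j)).
have HLf : forall j, exists kf : nat,
    (@Ablk R N nj (invmx T *m A *m T) j j - Lf j *m @Cblk R N nj r C T j j) ^+ kf = 0.
  by move=> j; exact: (proj2_sig (constructive_indefinite_description _ (Hex j))).
exists Lf => x tau zh Hx Hrun.
have [K HK] := eventually HT HA HCb HLf HJ Hx Hrun.
exists (\sum_(k < K) \sum_(i < N) (vnorm (zh k i - invmx T *m x k) / rho ^+ k)).
have Hge : forall (a : 'I_K) (b : 'I_N), 0 <= vnorm (zh a b - invmx T *m x a) / rho ^+ a.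
  by move=> a b; rewrite divr_ge0 ?vnorm_ge0 ?exprn_ge0 ?ltW.
have c_ge0 : 0 <= \sum_(k < K) \sum_(i < N) (vnorm (zh k i - invmx T *m x k) / rho ^+ k).
  by apply: sumr_ge0 => a _; apply: sumr_ge0.
split => // k i _.
set c := \sum_(k < K) _.
have Hfirst : vnorm (zh k i - invmx T *m x k) <= c * rho ^+ k.
  case: (ltnP k K) => Hk.
    rewrite -ler_pdivrMr ?exprn_gt0 //.
    exact: (@le_dsum R K N (fun (a : 'I_K) (b : 'I_N) => vnorm (zh a b - invmx T *m x a) / rho ^+ a) (Ordinal Hk) i Hge).
  rewrite (HK k i Hk) /z subrr vnorm0; apply: mulr_ge0 => //; apply: exprn_ge0; exact: ltW.
split => //.
have -> : T *m zh k i - x k = T *m (zh k i - invmx T *m x k) by rewrite mulmxBr mulKVmx.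
apply: le_trans (vnorm_mul _ _) _.
by rewrite -mulrA ler_wpM2l ?mnorm_ge0.
Qed.
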